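(* Let $m,n\in\mathbb{N}$, $T=\{1,\dots,m\}$, $\bar A\in\mathbb{R}^{m\times n}$, $\bar b\in\mathbb{R}^m$ with $P:=\{x\in\mathbb{R}^n\mid\bar Ax\le\bar b\}\neq\emptyset$, and let $F$ be a face of $P$. Then there exists $\gamma_F\ge0$ such that $\operatorname{clm}\mathcal{F}_{\bar A}(\bar b,x)=\gamma_F$ for all $x\in\operatorname{ri}F$, and moreover $\operatorname{clm}\mathcal{F}_{\bar A}(\bar b,x)\ge\gamma_F$ for all $x\in F\setminus\operatorname{ri}F$.
   Context: $\mathcal{F}_{\bar A}:\mathbb{R}^m\rightrightarrows\mathbb{R}^n$ is defined by $\mathcal{F}_{\bar A}(b)=\{x\in\mathbb{R}^n\mid\bar Ax\le b\}$ (right-hand side perturbations). $\mathbb{R}^n$ carries an arbitrary norm $\|\cdot\|$, $\mathbb{R}^m$ carries $\|b\|_\infty=\max_t|b_t|$, and $\operatorname{dist}(x,\Omega)=\inf_{\omega\in\Omega}\|x-\omega\|$. For $x\in\mathcal{F}_{\bar A}(\bar b)$, the calmness modulus $\operatorname{clm}\mathcal{F}_{\bar A}(\bar b,x)$ is the infimum of all $\kappa\ge0$ for which there are neighborhoods $V$ of $\bar b$ and $U$ of $x$ with $\operatorname{dist}(z,\mathcal{F}_{\bar A}(\bar b))\le\kappa\|b-\bar b\|_\infty$ for all $b\in V$ and all $z\in\mathcal{F}_{\bar A}(b)\cap U$. $\operatorname{ri}$ denotes relative interior. *)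

(* Defs.v *)
From HB Require Import structures.
From mathcomp Require Import all_boot all_order all_algebra.
From mathcomp Require Import classical_sets boolp reals constructive_ereal ereal.
Set Implicit Arguments. Unset Strict Implicit. Unset Printing Implicit Defensive.
Import Order.TTheory GRing.Theory Num.Theory.
Local Open Scope classical_set_scope.
Local Open Scope ring_scope.

Section Defs.
Variable R : realType.

Definition is_norm (n : nat) (N : 'cV[R]_n -> R) : Prop :=
  [/\ forall x, N x = 0 -> x = 0,
      forall (a : R) x, N (a *: x) = `|a| * N x
    & forall x y, N (x + y) <= N x + N y].

Definition supnorm (m : nat) (b : 'cV[R]_m) : R :=
  \big[Num.max/0]_(i < m) `|b i 0|.

Definition feas (m n : nat) (A : 'M[R]_(m, n)) (b : 'cV[R]_m) : set 'cV[R]_n :=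
  [set x | forall i : 'I_m, (A *m x) i 0 <= b i 0].

Definition distN (n : nat) (N : 'cV[R]_n -> R) (x : 'cV[R]_n) (O : set 'cV[R]_n) : R :=
  inf [set N (x - w) | w in O].

Definition calm_const (m n : nat) (N : 'cV[R]_n -> R) (A : 'M[R]_(m, n))
    (b : 'cV[R]_m) (x : 'cV[R]_n) (k : R) : Prop :=
  0 <= k /\ exists d e : R, [/\ 0 < d, 0 < e &
    forall (b' : 'cV[R]_m) (z : 'cV[R]_n),
      supnorm (b' - b) < d -> N (z - x) < e -> feas A b' z ->
      distN N z (feas A b) <= k * supnorm (b' - b)].

(* Calmness modulus (extended real: infimum of the empty set is +oo). *)
Definition clm (m n : nat) (N : 'cV[R]_n -> R) (A : 'M[R]_(m, n))
    (b : 'cV[R]_m) (x : 'cV[R]_n) : \bar R :=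
  ereal_inf [set k%:E | k in calm_const N A b x].

Definition convex_set (n : nat) (C : set 'cV[R]_n) : Prop :=
  forall x y (t : R), C x -> C y -> 0 <= t <= 1 -> C ((1 - t) *: x + t *: y).

(* Face in the sense of convex analysis (Rockafellar): a convex subset F of P
   such that whenever a relative-interior point of a closed segment in P lies
   in F, both endpoints lie in F. *)
Definition is_face (n : nat) (P F : set 'cV[R]_n) : Prop :=
  [/\ F `<=` P, convex_set F &
      forall x y (t : R), P x -> P y -> 0 < t < 1 ->
        F ((1 - t) *: x + t *: y) -> F x /\ F y].

Definition aff (n : nat) (F : set 'cV[R]_n) : set 'cV[R]_n :=
  [set y | exists (k : nat) (p : 'I_k -> 'cV[R]_n) (l : 'I_k -> R),
     [/\ forall i, F (p i), \sum_(i < k) l i = 1 & y = \sum_(i < k) l i *: p i]].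

Definition ri (n : nat) (N : 'cV[R]_n -> R) (F : set 'cV[R]_n) : set 'cV[R]_n :=
  [set x | F x /\ exists e : R, 0 < e /\
     forall y, aff F y -> N (y - x) < e -> F y].

End Defs.

(* Main.v *)
Require Import Defs.
From HB Require Import structures.
From mathcomp Require Import all_boot all_order all_algebra.
From mathcomp Require Import classical_sets boolp reals constructive_ereal ereal.
From mathcomp Require Import topology normedtype derive.
From mathcomp Require Import ring lra.
From Stdlib Require Import List.
Set Implicit Arguments. Unset Strict Implicit. Unset Printing Implicit Defensive.
Import numFieldNormedType.Exports.
Import Order.TTheory GRing.Theory Num.Theory.
Local Open Scope classical_set_scope.
Local Open Scope ring_scope.

Definition dotf (R : realType) n (a u : 'I_n -> R) : R := \sum_(i < n) a i * u i.

Definition tlf (R : realType) n (a : 'I_n.+1 -> R) : 'I_n -> R := fun j => a (lift ord0 j).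

Lemma dotf_rec (R : realType) n (a u : 'I_n.+1 -> R) :
  dotf a u = a ord0 * u ord0 + dotf (tlf a) (tlf u).
Proof. by rewrite /dotf big_ord_recl. Qed.

Lemma dotfB (R : realType) n (a u v : 'I_n -> R) :
  dotf a (fun i => u i - v i) = dotf a u - dotf a v.
Proof.
rewrite /dotf -sumrB; apply: eq_bigr => i _; by rewrite mulrBr.
Qed.

Lemma dotf_lin (R : realType) n (a a' u : 'I_n -> R) (c c' : R) :
  dotf (fun i => c * a i + c' * a' i) u = c * dotf a u + c' * dotf a' u.
Proof.
rewrite /dotf !mulr_sumr -big_split /=; apply: eq_bigr => i _; ring.
Qed.

Lemma dotf_bound (R : realType) n (a v : 'I_n -> R) (B : R) :
  (forall i, `|v i| <= B) -> `|dotf a v| <= (\sum_(i < n) `|a i|) * B.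
Proof.
move=> hv; rewrite /dotf mulr_suml; apply: le_trans (ler_norm_sum _ _ _) _.
apply: ler_sum => i _; rewrite normrM; apply: ler_wpM2l => //.
Qed.

Lemma list_max (R : realType) (l : list R) (x0 : R) :
  exists t, x0 <= t /\ (forall y, In y l -> y <= t) /\ (t = x0 \/ In t l).
Proof.
elim: l => [|a l [t [h1 [h2 h3]]]]; first by exists x0; split => //; split => //; left.
have [hle|ta] := leP a t.
  exists t; split => //; split; first by move=> y [<-|/h2].
  by case: h3 => [->|h]; [left|right; right].
exists a; split; first by apply: le_trans h1 (ltW ta).
split; last by right; left.
by move=> y [<-|/h2 yt] //; apply: le_trans yt (ltW ta).
Qed.

Definition sumL (R : realType) (T : Type) (F : T -> R) (l : list T) : R :=
  fold_right (fun a acc => F a + acc) 0 l.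

Lemma sumL_ge0 (R : realType) (T : Type) (F : T -> R) l :
  (forall a, 0 <= F a) -> 0 <= sumL F l.
Proof. by move=> h; elim: l => //= a l ih; apply: addr_ge0. Qed.

Lemma sumL_ge (R : realType) (T : Type) (F : T -> R) l a :
  (forall a, 0 <= F a) -> In a l -> F a <= sumL F l.
Proof.
move=> h; elim: l => //= x l ih [->|/ih]; first by rewrite lerDl sumL_ge0.
by move=> le; apply: le_trans le _; rewrite lerDr.
Qed.

Lemma unlift0 (n : nat) : unlift (@ord0 n) ord0 = None.
Proof. by rewrite unlift_none. Qed.

Lemma hoffman (R : realType) n (s : list ('I_n -> R)) :
  exists K : R, 0 <= K /\ forall (d : 'I_n -> R) (r : R), 0 <= r ->
    (forall a, In a s -> dotf a d <= r) ->
    exists c : 'I_n -> R, (forall a, In a s -> dotf a c <= 0) /\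
      forall j, `|d j - c j| <= K * r.
Proof.
elim: n s => [|n IH] s.
  exists 0; split => // d r r0 hd; exists d; split.
    by move=> a _; rewrite /dotf big_ord0.
  by move=> j; rewrite subrr normr0 mul0r.
pose Z := map (@tlf R n) (filter (fun a => a ord0 == 0) s).
pose Pl := filter (fun a : 'I_n.+1 -> R => 0 < a ord0) s.
pose Nl := filter (fun a : 'I_n.+1 -> R => a ord0 < 0) s.
pose comb (p q : 'I_n.+1 -> R) : 'I_n -> R :=
  fun j => (p ord0)^-1 / ((p ord0)^-1 + - (q ord0)^-1) * tlf p j
         + (- (q ord0)^-1) / ((p ord0)^-1 + - (q ord0)^-1) * tlf q j.
pose s' := Z ++ flat_map (fun p => map (comb p) Nl) Pl.
have [K' [K'0 HK']] := IH s'.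
pose L (a : 'I_n.+1 -> R) := `|(a ord0)^-1| * (1 + (\sum_(i < n) `|tlf a i|) * K').
pose B := sumL L s.
have L0 : forall a, 0 <= L a.
  move=> a; apply: mulr_ge0 => //; apply: addr_ge0 => //; apply: mulr_ge0 => //.
  by apply: sumr_ge0.
have B0 : 0 <= B by apply: sumL_ge0.
exists (B + K'); split; first by apply: addr_ge0.
move=> d r r0 hd.
pose d' := tlf d. pose s0 := d ord0.
have hd' : forall a, In a s' -> dotf a d' <= r.
  move=> a /in_app_iff [/in_map_iff [a0 [<- /filter_In [a0s /eqP a00]]] |
     /in_flat_map [p [/filter_In [ps p0] /in_map_iff [q [<- /filter_In [qs q0]]]]]].
    by have := hd a0 a0s; rewrite dotf_rec a00 mul0r add0r.
  rewrite /comb dotf_lin.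
  have hp := hd p ps; rewrite dotf_rec in hp.
  have hq := hd q qs; rewrite dotf_rec in hq.
  set X := dotf (tlf p) _ in hp *; set Y := dotf (tlf q) _ in hq *.
  set ia := (p ord0)^-1; set ib := - (q ord0)^-1.
  have ia0 : 0 < ia by rewrite invr_gt0.
  have ib0 : 0 < ib by rewrite oppr_gt0 invr_lt0.
  have e1 : s0 + ia * X <= ia * r.
    have := ler_wpM2l (ltW ia0) hp.
    by rewrite mulrDr mulrA (mulrC ia) mulfV ?mul1r // gt_eqF.
  have e2 : - s0 + ib * Y <= ib * r.
    have := ler_wpM2l (ltW ib0) hq.
    by rewrite mulrDr mulrA (mulrC ib) /ib mulrN mulfV ?mulN1r // lt_eqF.
  have D0 : 0 < ia + ib by apply: addr_gt0.
  have -> : ia / (ia + ib) * X + ib / (ia + ib) * Y = (ia * X + ib * Y) / (ia + ib).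
    by field; rewrite gt_eqF.
  by rewrite ler_pdivrMr //; lra.
have [c' [hc' hdc']] := HK' d' r r0 hd'.
pose h (a : 'I_n.+1 -> R) := - (a ord0)^-1 * dotf (tlf a) c'.
have F1 : forall p, In p Pl -> s0 - B * r <= h p.
  move=> p /filter_In [ps p0].
  have hp := hd p ps; rewrite dotf_rec in hp.
  set X := dotf (tlf p) (tlf d) in hp.
  rewrite /h; set X' := dotf (tlf p) c'.
  set ia := (p ord0)^-1.
  have ia0 : 0 < ia by rewrite invr_gt0.
  have e1 : s0 + ia * X <= ia * r.
    have := ler_wpM2l (ltW ia0) hp.
    by rewrite mulrDr mulrA (mulrC ia) mulfV ?mul1r // gt_eqF.
  have e2 : `|X - X'| <= (\sum_(i < n) `|tlf p i|) * (K' * r).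
    by rewrite /X /X' -dotfB; apply: dotf_bound.
  have e3 : ia * (X' - X) <= ia * ((\sum_(i < n) `|tlf p i|) * (K' * r)).
    by apply: ler_wpM2l; [exact: ltW|rewrite distrC in e2; exact: le_trans (ler_norm _) e2].
  have e4 : L p * r <= B * r by apply: ler_wpM2r => //; exact: (sumL_ge L0 ps).
  rewrite /L gtr0_norm // -/ia in e4.
  move: e3 e4; set S := \sum_(i < n) _ => e3 e4.
  have : ia * X' - ia * X <= ia * S * K' * r by rewrite -mulrBr -!mulrA.
  have : ia * r + ia * S * K' * r <= B * r.
    by apply: le_trans e4; rewrite !mulrDr !mulrDl !mulrA mulr1.
  rewrite -/s0 -/d' => h1 h2; lra.
have F2 : forall q, In q Nl -> h q <= s0 + B * r.
  move=> q /filter_In [qs q0].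
  have hq := hd q qs; rewrite dotf_rec in hq.
  set Y := dotf (tlf q) (tlf d) in hq.
  rewrite /h; set Y' := dotf (tlf q) c'.
  set ib := - (q ord0)^-1.
  have ib0 : 0 < ib by rewrite oppr_gt0 invr_lt0.
  have e1 : - s0 + ib * Y <= ib * r.
    have := ler_wpM2l (ltW ib0) hq.
    by rewrite mulrDr mulrA (mulrC ib) /ib mulrN mulfV ?mulN1r // lt_eqF.
  have e2 : `|Y - Y'| <= (\sum_(i < n) `|tlf q i|) * (K' * r).
    by rewrite /Y /Y' -dotfB; apply: dotf_bound.
  have e3 : ib * (Y' - Y) <= ib * ((\sum_(i < n) `|tlf q i|) * (K' * r)).
    by apply: ler_wpM2l; [exact: ltW|rewrite distrC in e2; exact: le_trans (ler_norm _) e2].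
  have e4 : L q * r <= B * r by apply: ler_wpM2r => //; exact: (sumL_ge L0 qs).
  rewrite /L ltr0_norm ?invr_lt0 // -/ib in e4.
  move: e3 e4; set S := \sum_(i < n) _ => e3 e4.
  have : ib * Y' - ib * Y <= ib * S * K' * r by rewrite -mulrBr -!mulrA.
  have : ib * r + ib * S * K' * r <= B * r.
    by apply: le_trans e4; rewrite !mulrDr !mulrDl !mulrA mulr1.
  rewrite -/s0 -/d' -/ib => h1 h2; lra.
have F3 : forall p q, In p Pl -> In q Nl -> h q <= h p.
  move=> p q pP qN.
  have := hc' (comb p q) (proj2 (in_app_iff _ _ _) (or_intror
     (proj2 (in_flat_map _ _ _) (ex_intro _ p (conj pP
        (proj2 (in_map_iff _ _ _) (ex_intro _ q (conj erefl qN)))))))).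
  move: pP qN => /filter_In [_ p0] /filter_In [_ q0].
  rewrite /comb dotf_lin /h.
  set X := dotf (tlf p) c'; set Y := dotf (tlf q) c'.
  set ia := (p ord0)^-1; set ib := - (q ord0)^-1.
  have ia0 : 0 < ia by rewrite invr_gt0.
  have ib0 : 0 < ib by rewrite oppr_gt0 invr_lt0.
  have D0 : 0 < ia + ib by apply: addr_gt0.
  have -> : ia / (ia + ib) * X + ib / (ia + ib) * Y = (ia * X + ib * Y) / (ia + ib).
    by field; rewrite gt_eqF.
  rewrite ler_pdivrMr // mul0r => hh.
  change (ib * Y <= - ia * X); lra.
have [t [t1 [t2 t3]]] := list_max (map h Nl) (s0 - B * r).
have tP : forall p, In p Pl -> t <= h p.
  move=> p pP; case: t3 => [->|/in_map_iff [q [<- qN]]]; first exact: F1.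
  exact: F3.
have Br0 : 0 <= B * r by apply: mulr_ge0.
have tN : t <= s0 + B * r.
  case: t3 => [->|/in_map_iff [q [<- qN]]]; first by lra.
  exact: F2.
pose c := fun j : 'I_n.+1 => if unlift ord0 j is Some k then c' k else t.
have c0 : c ord0 = t by rewrite /c unlift0.
have ctl : forall a, dotf a (tlf c) = dotf a c'.
  by move=> a; apply: eq_bigr => i _; rewrite /tlf /c liftK.
exists c; split.
  move=> a ah; rewrite dotf_rec c0 ctl.
  have [a0|a0|a0] := ltgtP (a ord0) 0.
  - have aN : In a Nl by apply/filter_In; split.
    have := t2 _ (proj2 (in_map_iff _ _ _) (ex_intro _ a (conj erefl aN))).
    rewrite /h => ht.
    have : a ord0 * t <= a ord0 * (- (a ord0)^-1 * dotf (tlf a) c').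
      by rewrite ler_wnM2l // ltW.
    by rewrite mulrA mulrN mulfV ?lt_eqF // mulN1r; lra.
  - have aP : In a Pl by apply/filter_In; split.
    have := tP _ aP; rewrite /h => ht.
    have : a ord0 * t <= a ord0 * (- (a ord0)^-1 * dotf (tlf a) c').
      by rewrite ler_wpM2l // ltW.
    by rewrite mulrA mulrN mulfV ?gt_eqF // mulN1r; lra.
  - rewrite a0 mul0r add0r; apply: hc'; apply/in_app_iff; left.
    by apply/in_map_iff; exists a; split => //; apply/filter_In; split => //; apply/eqP.
move=> j; case: (unliftP ord0 j) => [k ->|->].
  rewrite /c liftK; apply: le_trans (hdc' k) _.
  by apply: ler_wpM2r => //; rewrite lerDr.
rewrite c0 -/s0; apply: (@le_trans _ _ (B * r)).
  by rewrite ler_norml; lra.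
by apply: ler_wpM2r => //; rewrite lerDl.
Qed.

Lemma N0 (R : realType) n (N : 'cV[R]_n -> R) : is_norm N -> N 0 = 0.
Proof. by case=> _ hZ _; rewrite -(scale0r (0 : 'cV[R]_n)) hZ normr0 mul0r. Qed.

Lemma NN (R : realType) n (N : 'cV[R]_n -> R) x : is_norm N -> N (- x) = N x.
Proof. by case=> _ hZ _; rewrite -scaleN1r hZ normrN normr1 mul1r. Qed.

Lemma Nge0 (R : realType) n (N : 'cV[R]_n -> R) x : is_norm N -> 0 <= N x.
Proof.
move=> hN; have := hN; case=> _ _ hT; have := hT x (- x).
by rewrite subrr N0 // NN //; lra.
Qed.

Lemma Nsum (R : realType) n (N : 'cV[R]_n -> R) (I : Type) (r : list I) (f : I -> 'cV[R]_n) :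
  is_norm N -> N (\sum_(i <- r) f i) <= \sum_(i <- r) N (f i).
Proof.
move=> hN; apply: (big_ind2 (fun x y => N x <= y)); first by rewrite N0.
  move=> a1 a2 b1 b2 h1 h2; case: hN => _ _ hT; apply: le_trans (hT _ _) _.
  exact: lerD.
by [].
Qed.

Lemma Nup (R : realType) n (N : 'cV[R]_n -> R) : is_norm N ->
  exists M : R, 0 <= M /\ forall (u : 'cV[R]_n) (B : R), (forall j, `|u j 0| <= B) -> N u <= M * B.
Proof.
move=> hN; exists (\sum_(i < n) \sum_(j < 1) N (delta_mx i j)); split.
  by apply: sumr_ge0 => i _; apply: sumr_ge0 => j _; apply: Nge0.
move=> u B hu; rewrite {1}(matrix_sum_delta u).
apply: le_trans (Nsum _ _ hN) _; rewrite mulr_suml; apply: ler_sum => i _.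
apply: le_trans (Nsum _ _ hN) _; rewrite mulr_suml; apply: ler_sum => j _.
have := hN; case=> _ hZ _; rewrite hZ [X in _ <= X]mulrC; apply: ler_wpM2r.
  exact: Nge0.
by rewrite (ord1 j); apply: hu.
Qed.

Lemma Ndiff (R : realType) n (N : 'cV[R]_n -> R) a b : is_norm N ->
  `|N a - N b| <= N (a - b).
Proof.
move=> hN; have := hN; case=> _ _ hT.
have h1 := hT (a - b) b; have h2 := hT (b - a) a.
rewrite subrK in h1; rewrite subrK in h2.
rewrite -opprB NN // in h2.
by rewrite ler_norml; apply/andP; split; lra.
Qed.

Lemma rV_coord (R : realType) n (v : 'rV[R]_n) j : `|v 0 j| <= `|v|.
Proof.
rewrite [leRHS]/Num.norm /= mx_normrE; apply/bigmax_geP; right => /=.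
by exists (0, j).
Qed.

Lemma lip_cont (R : realType) (V : pseudoMetricNormedZmodType R) (f : V -> R) (C : R) :
  0 <= C -> (forall x y, `|f x - f y| <= C * `|x - y|) -> continuous f.
Proof.
move=> C0 hf x; apply/cvgrPdist_lt => e e0.
apply/nbhs_normP; exists (e / (C + 1)).
  by rewrite /= divr_gt0 //; lra.
move=> t /= xt.
apply: le_lt_trans (hf x t) _.
apply: (@le_lt_trans _ _ (C * (e / (C + 1)))).
  by apply: ler_wpM2l => //; apply: ltW.
rewrite mulrA ltr_pdivrMr; last by lra.
lra.
Qed.
Lemma Nlow (R : realType) n (N : 'cV[R]_n -> R) : is_norm N ->
  exists c : R, 0 < c /\ forall (u : 'cV[R]_n) j, `|u j 0| <= c * N u.
Proof.
move=> hN; case: n N hN => [|n] N hN.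
  by exists 1; split => // u [].
have [M [M0 HM]] := Nup hN.
pose Nr (v : 'rV[R]_n.+1) := N v^T.
have Nrc : continuous Nr.
  apply: (@lip_cont _ _ _ M M0) => x t.
  apply: le_trans (Ndiff _ _ hN) _.
  rewrite -raddfB /=.
  apply: HM => j; rewrite mxE; exact: rV_coord.
pose S := [set v : 'rV[R]_n.+1 | `|v| = 1].
have nS : forall v : 'rV[R]_n.+1, v != 0 -> S (`|v|^-1 *: v).
  move=> v v0; rewrite /S /= normrZ ger0_norm ?invr_ge0 ?normr_ge0 //.
  by rewrite mulVf // normr_eq0.
have S0 : S !=set0.
  exists (`|delta_mx 0 0 : 'rV[R]_n.+1|^-1 *: delta_mx 0 0); apply: nS.
  by apply/eqP => /matrixP /(_ 0 0); rewrite !mxE !eqxx /= => /eqP; rewrite oner_eq0.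
have cS : compact S.
  apply: bounded_closed_compact.
    by exists 1; split => // M' M'1 x /= ->; apply: ltW.
  have -> : S = (fun v : 'rV[R]_n.+1 => `|v|) @^-1` [set x : R | x = 1] by [].
  apply: preimage_closed.
    by move=> x _; apply: norm_continuous.
  exact: closed_eq.
have cf : {within S, continuous Nr} by apply: continuous_subspaceT.
have [v0 v0S hmin] := compact_EVT_min S0 cS cf.
have c00 : 0 < Nr v0.
  rewrite lt_neqAle Nge0 // andbT; apply/eqP => /esym h.
  have := hN; case=> h0 _ _; move: (h0 _ h) => /(congr1 trmx); rewrite trmxK trmx0.
  by move: v0S; rewrite inE /S /= => + h1; rewrite h1 normr0 => /esym /eqP; rewrite oner_eq0.
exists (Nr v0)^-1; split; first by rewrite invr_gt0.
move=> u j.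
have -> : u j 0 = u^T 0 j by rewrite mxE.
have [v0'|vn0] := eqVneq u^T 0.
  by rewrite v0' mxE normr0 mulr_ge0 ?invr_ge0 ?Nge0 // ltW.
apply: le_trans (rV_coord _ _) _.
have := hmin _ (mem_set (nS _ vn0)).
rewrite /Nr linearZ /= trmxK.
have := hN; case=> _ hZ _; rewrite hZ ger0_norm ?invr_ge0 ?normr_ge0 //.
have np : 0 < `|u^T| by rewrite normr_gt0.
rewrite ler_pdivlMl // => hh.
by rewrite ler_pdivlMl // mulrC.
Qed.

Lemma supnorm_ge (R : realType) m (v : 'cV[R]_m) i : `|v i 0| <= supnorm v.
Proof.
rewrite /supnorm (bigD1 i) //= le_max lexx //.
Qed.

Lemma supnorm_ge0 (R : realType) m (v : 'cV[R]_m) : 0 <= supnorm v.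
Proof.
rewrite /supnorm; apply: (big_ind (fun x => 0 <= x)) => //.
by move=> x y hx hy; rewrite le_max hx.
Qed.

Lemma supnorm_le (R : realType) m (v : 'cV[R]_m) B :
  0 <= B -> (forall i, `|v i 0| <= B) -> supnorm v <= B.
Proof.
move=> B0 h; rewrite /supnorm; apply: (big_ind (fun x => x <= B)) => //.
by move=> x y hx hy; rewrite ge_max hx hy.
Qed.

Lemma AD (R : realType) m n (A : 'M[R]_(m, n)) (u v : 'cV[R]_n) i :
  (A *m (u + v)) i 0 = (A *m u) i 0 + (A *m v) i 0.
Proof. by rewrite mulmxDr !mxE. Qed.

Lemma AB (R : realType) m n (A : 'M[R]_(m, n)) (u v : 'cV[R]_n) i :
  (A *m (u - v)) i 0 = (A *m u) i 0 - (A *m v) i 0.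
Proof. by rewrite mulmxDr mulmxN !mxE. Qed.

Lemma AZ (R : realType) m n (A : 'M[R]_(m, n)) (a : R) (u : 'cV[R]_n) i :
  (A *m (a *: u)) i 0 = a * (A *m u) i 0.
Proof. by rewrite -scalemxAr !mxE. Qed.

Lemma Abound (R : realType) m n (N : 'cV[R]_n -> R) (A : 'M[R]_(m, n)) :
  is_norm N -> exists CA : R, 0 < CA /\ forall (u : 'cV[R]_n) i, `|(A *m u) i 0| <= CA * N u.
Proof.
move=> hN; have [c [c0 hc]] := Nlow hN.
pose S := \sum_(i < m) \sum_(j < n) `|A i j|.
have S0 : 0 <= S by apply: sumr_ge0 => i _; apply: sumr_ge0.
exists (S * c + 1); split; first by apply: ltr_wpDl => //; apply: mulr_ge0 => //; apply: ltW.
move=> u i; rewrite mxE.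
apply: le_trans (ler_norm_sum _ _ _) _.
apply: (@le_trans _ _ ((\sum_(j < n) `|A i j|) * (c * N u))).
  rewrite mulr_suml; apply: ler_sum => j _; rewrite normrM.
  by apply: ler_wpM2l => //; apply: hc.
have Nu0 := Nge0 u hN.
have cN0 : 0 <= c * N u by apply: mulr_ge0 => //; apply: ltW.
apply: (@le_trans _ _ (S * (c * N u))).
  apply: ler_wpM2r => //; rewrite /S (bigD1 i) //= lerDl.
  by apply: sumr_ge0 => k _; apply: sumr_ge0.
rewrite mulrDl mul1r mulrA lerDl //.
Qed.

Lemma dist_lb (R : realType) m n (N : 'cV[R]_n -> R) (A : 'M[R]_(m, n)) b z :
  is_norm N -> has_lbound [set N (z - w) | w in feas A b].
Proof. by move=> hN; exists 0 => _ [w _ <-]; apply: Nge0. Qed.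

Lemma dist_le (R : realType) m n (N : 'cV[R]_n -> R) (A : 'M[R]_(m, n)) b z w :
  is_norm N -> feas A b w -> distN N z (feas A b) <= N (z - w).
Proof.
move=> hN hw; rewrite /distN; apply: ge_inf; first exact: dist_lb.
by exists w.
Qed.

Lemma dist_adh (R : realType) m n (N : 'cV[R]_n -> R) (A : 'M[R]_(m, n)) b z eta :
  is_norm N -> feas A b !=set0 -> 0 < eta ->
  exists w, feas A b w /\ N (z - w) < distN N z (feas A b) + eta.
Proof.
move=> hN [w0 hw0] eta0.
have [_ [w hw <-] h] := @inf_adherent _ [set N (z - w) | w in feas A b] eta eta0
   (conj (ex_intro _ _ (ex_intro2 _ _ w0 hw0 erefl)) (dist_lb A b z hN)).
by exists w.
Qed.

Lemma pos_min (R : realType) m (P : pred 'I_m) (f : 'I_m -> R) :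
  (forall i, P i -> 0 < f i) -> exists g : R, 0 < g /\ forall i, P i -> g <= f i.
Proof.
move=> hf; pose S := \sum_(i < m | P i) (f i)^-1.
have S0 : 0 <= S by apply: sumr_ge0 => i Pi; rewrite invr_ge0 ltW // hf.
exists (1 + S)^-1; split; first by rewrite invr_gt0; lra.
move=> i Pi; have fi := hf i Pi.
rewrite -[leRHS]invrK lef_pV2 ?posrE ?invr_gt0 //; last by lra.
apply: (@le_trans _ _ S); last by lra.
by rewrite /S (bigD1 i) //= lerDl; apply: sumr_ge0 => j /andP [Pj _]; rewrite invr_ge0 ltW // hf.
Qed.

Lemma scale_id (R : realType) n (u : 'cV[R]_n) : u = u. Proof. by []. Qed.

Lemma transfer (R : realType) m n (N : 'cV[R]_n -> R) (A : 'M[R]_(m, n)) b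
    (x y : 'cV[R]_n) k :
  is_norm N -> feas A b x -> feas A b y ->
  (forall i, (A *m x) i 0 = b i 0 -> (A *m y) i 0 = b i 0) ->
  calm_const N A b y k -> calm_const N A b x k.
Proof.
move=> hN hx hy hact [k0 [dy [ey [dy0 ey0 hk]]]].
have hP : feas A b !=set0 by exists x.
have [CA [CA0 hCA]] := Abound A hN.
have hpos : forall i, (A *m y) i 0 != b i 0 -> 0 < b i 0 - (A *m x) i 0.
  move=> i hi; rewrite subr_gt0 lt_neqAle hx andbT; apply/eqP => /hact h.
  by move: hi; rewrite h eqxx.
have [g [g0 hg]] := @pos_min R m (fun i => (A *m y) i 0 != b i 0)
   (fun i => b i 0 - (A *m x) i 0) hpos.
pose e0 := g / (4 * CA).
pose d0 := g / (4 * CA * (k + 1)).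
have e00 : 0 < e0 by rewrite divr_gt0 // mulr_gt0.
have d00 : 0 < d0 by rewrite divr_gt0 // !mulr_gt0 //; lra.
have CAe0 : CA * e0 = g / 4 by rewrite /e0; field; rewrite gt_eqF.
have CAd0 : CA * (k * d0) <= g / 4.
  have -> : CA * (k * d0) = g / 4 * (k / (k + 1)).
    by rewrite /d0; field; rewrite !gt_eqF //; lra.
  rewrite ler_piMr ?divr_ge0 //; first by apply: ltW.
  by rewrite ler_pdivrMr; lra.

split=> //; exists d0, e0; split => // b' z hb' hz hfz.
set de := supnorm (b' - b).
have de0 : 0 <= de by apply: supnorm_ge0.
apply/ler_addgt0Pr => eta eta0.
pose eta1 := Num.min eta e0.
have eta10 : 0 < eta1 by rewrite lt_min eta0 e00.
have eta1e : eta1 <= eta by rewrite ge_min lexx.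
have eta1e0 : eta1 <= e0 by rewrite ge_min lexx orbT.
apply: (@le_trans _ _ (k * de + eta1)); last by rewrite lerD2l.
pose l := Num.min 1 (Num.min (dy / d0) (ey / (N (z - y) + 1))).
have Nzy0 := Nge0 (z - y) hN.
have l0 : 0 < l.
  have h1 : 0 < dy / d0 by rewrite divr_gt0.
  have h2 : 0 < ey / (N (z - y) + 1) by rewrite divr_gt0 //; lra.
  by rewrite !lt_min ltr01 h1 h2.
have l1 : l <= 1 by rewrite ge_min lexx.
have l2 : l <= dy / d0 by rewrite ge_min ge_min lexx orbT.
have l3 : l <= ey / (N (z - y) + 1) by rewrite ge_min ge_min lexx !orbT.
have lde : l * de < dy.
  apply: (@le_lt_trans _ _ (dy / d0 * de)); first by apply: ler_wpM2r.
  by rewrite mulrAC ltr_pdivrMr // ltr_pM2l.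
have lzy : l * N (z - y) < ey.
  apply: (@lt_le_trans _ _ (l * (N (z - y) + 1))); first by rewrite ltr_pM2l //; lra.
  by rewrite -ler_pdivlMr //; lra.
pose z' := (1 - l) *: y + l *: z.
pose b'' := (1 - l) *: b + l *: b'.
have hb'' : supnorm (b'' - b) <= l * de.
  apply: supnorm_le; first by apply: mulr_ge0 => //; apply: ltW.
  move=> i; have -> : (b'' - b) i 0 = l * (b' - b) i 0 by rewrite !mxE; ring.
  by rewrite normrM gtr0_norm //; apply: ler_wpM2l; [apply: ltW|apply: supnorm_ge].
have fz' : feas A b'' z'.
  move=> i; have -> : b'' i 0 = (1 - l) * b i 0 + l * b' i 0 by rewrite !mxE.
  rewrite /z' AD !AZ.
  apply: lerD; apply: ler_wpM2l; [lra|exact: hy|lra|exact: hfz].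
have Nz'y : N (z' - y) = l * N (z - y).
  have -> : z' - y = l *: (z - y) by apply/matrixP => i j; rewrite !mxE; ring.
  by have := hN; case=> _ hZ _; rewrite hZ gtr0_norm.
have hz' : N (z' - y) < ey by rewrite Nz'y.
have hd := hk b'' z' (le_lt_trans hb'' lde) hz' fz'.
have hd2 : distN N z' (feas A b) <= k * (l * de).
  by apply: le_trans hd _; apply: ler_wpM2l.
have [w [hw hw2]] := dist_adh z' hN hP (mulr_gt0 l0 eta10).
pose w' := y + l^-1 *: (w - y).
have Nw : N (z - w') = l^-1 * N (z' - w).
  have -> : z - w' = l^-1 *: (z' - w).
    by apply/matrixP => i j; rewrite !mxE; field; rewrite gt_eqF.
  by have := hN; case=> _ hZ _; rewrite hZ gtr0_norm // invr_gt0.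
have Nw2 : l^-1 * N (z' - w) < k * de + eta1.
  rewrite ltr_pdivrMl //.
  apply: lt_le_trans hw2 _; apply: le_trans (lerD hd2 (lexx _)) _.
  by rewrite mulrDr mulrCA.
suff fw' : feas A b w'.
  by apply: le_trans (dist_le _ hN fw') _; rewrite Nw; apply: ltW.
move=> i; have [hyi|hyi] := eqVneq ((A *m y) i 0) (b i 0).
  rewrite /w' AD AZ AB hyi.
  have := hw i; have : 0 < l^-1 by rewrite invr_gt0.
  move=> li hwi; have : l^-1 * ((A *m w) i 0 - b i 0) <= 0.
    by apply: mulr_ge0_le0; [apply: ltW|lra].
  lra.
have gi := hg i hyi.
have -> : w' = x + (l^-1 *: (w - z') + (z - x)).
  by apply/matrixP => i' j; rewrite !mxE; field; rewrite gt_eqF.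
rewrite AD AD AZ.
have h1 : (A *m (w - z')) i 0 <= CA * N (z' - w).
  by apply: le_trans (ler_norm _) _; rewrite -(NN _ hN) opprB; apply: hCA.
have h2 : (A *m (z - x)) i 0 <= CA * N (z - x).
  by apply: le_trans (ler_norm _) _; apply: hCA.
have h3 : l^-1 * (A *m (w - z')) i 0 <= CA * (l^-1 * N (z' - w)).
  by rewrite mulrCA; apply: ler_wpM2l => //; rewrite invr_ge0 ltW.
have h4 : CA * (l^-1 * N (z' - w)) <= CA * (k * de + eta1).
  by apply: ler_wpM2l; [apply: ltW|apply: ltW].
have h5 : CA * N (z - x) <= CA * e0 by apply: ler_wpM2l; [apply: ltW|apply: ltW].
have h6 : CA * (k * de) <= CA * (k * d0).
  by apply: ler_wpM2l; [apply: ltW|apply: ler_wpM2l => //; apply: ltW].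
have h7 : CA * eta1 <= CA * e0 by apply: ler_wpM2l => //; apply: ltW.
rewrite mulrDr in h4.
lra.
Qed.

Lemma In_mem (T : eqType) (x : T) (s : list T) : x \in s -> In x s.
Proof.
elim: s => //= y s ih; rewrite inE => /orP [/eqP ->|/ih]; [left|right] => //.
Qed.

Lemma calm_exists (R : realType) m n (N : 'cV[R]_n -> R) (A : 'M[R]_(m, n)) b
    (x : 'cV[R]_n) :
  is_norm N -> feas A b x -> exists k, calm_const N A b x k.
Proof.
move=> hN hx.
have [CA [CA0 hCA]] := Abound A hN.
have [M [M0 HM]] := Nup hN.
pose act i := (A *m x) i 0 == b i 0.
pose rows := List.map (fun i : 'I_m => fun j : 'I_n => A i j) (List.filter act (enum 'I_m)).
have [K [K0 HK]] := hoffman rows.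
have hpos : forall i, ~~ act i -> 0 < b i 0 - (A *m x) i 0.
  by move=> i hi; rewrite subr_gt0 lt_neqAle hx andbT.
have [g [g0 hg]] := @pos_min R m (fun i => ~~ act i)
   (fun i => b i 0 - (A *m x) i 0) hpos.
pose k := M * K.
have k0 : 0 <= k by apply: mulr_ge0.
pose e0 := g / (4 * CA).
pose d0 := g / (4 * CA * (k + 1)).
have e00 : 0 < e0 by rewrite divr_gt0 // mulr_gt0.
have d00 : 0 < d0 by rewrite divr_gt0 // !mulr_gt0 //; lra.
have CAe0 : CA * e0 = g / 4 by rewrite /e0; field; rewrite gt_eqF.
have CAd0 : CA * (k * d0) <= g / 4.
  have -> : CA * (k * d0) = g / 4 * (k / (k + 1)).
    by rewrite /d0; field; rewrite !gt_eqF //; lra.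
  rewrite ler_piMr ?divr_ge0 //; first by apply: ltW.
  by rewrite ler_pdivrMr; lra.
exists k; split => //; exists d0, e0; split => // b' z hb' hz hfz.
set de := supnorm (b' - b).
have de0 : 0 <= de by apply: supnorm_ge0.
pose dfun := fun j => (z - x) j 0.
have rowE : forall i (u : 'cV[R]_n), dotf (fun j => A i j) (fun j => u j 0) = (A *m u) i 0.
  by move=> i u; rewrite mxE.
have hrows : forall a, In a rows -> dotf a dfun <= de.
  move=> a /in_map_iff [i [<- /filter_In [_ /eqP hi]]].
  rewrite rowE AB hi.
  apply: (@le_trans _ _ (b' i 0 - b i 0)); first by rewrite lerD2r; apply: hfz.
  have : `|(b' - b) i 0| <= de by apply: supnorm_ge.
  by rewrite !mxE => /(le_trans (ler_norm _)).
have [c [hc hdc]] := HK dfun de de0 hrows.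
pose cv : 'cV[R]_n := \col_j c j.
have cvE : forall i, (A *m cv) i 0 = dotf (fun j => A i j) c.
  by move=> i; rewrite mxE; apply: eq_bigr => j _; rewrite mxE.
have hNd : N ((z - x) - cv) <= k * de.
  rewrite /k -mulrA; apply: HM => j.
  by have := hdc j; rewrite /dfun !mxE.
suff fw : feas A b (x + cv).
  apply: le_trans (dist_le _ hN fw) _.
  by have -> : z - (x + cv) = (z - x) - cv by rewrite opprD addrA.
move=> i; rewrite AD cvE.
have [hi|hi] := boolP (act i).
  have : In (fun j => A i j) rows.
    apply/in_map_iff; exists i; split => //; apply/filter_In; split => //.
    by apply: In_mem; rewrite mem_enum.
  move=> /hc; move: hi => /eqP hi; lra.
have gi := hg i hi.
have e1 : (A *m cv) i 0 = (A *m (z - x)) i 0 - (A *m ((z - x) - cv)) i 0.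
  by rewrite [X in _ = _ - X]AB; ring.
rewrite -cvE e1.
have h1 : (A *m (z - x)) i 0 <= CA * N (z - x).
  by apply: le_trans (ler_norm _) _; apply: hCA.
have h2 : - (A *m ((z - x) - cv)) i 0 <= CA * N ((z - x) - cv).
  by apply: le_trans (ler_norm _) _; rewrite normrN; apply: hCA.
have h3 : CA * N (z - x) <= CA * e0 by apply: ler_wpM2l; [apply: ltW|apply: ltW].
have h4 : CA * N ((z - x) - cv) <= CA * (k * de) by apply: ler_wpM2l => //; apply: ltW.
have h5 : CA * (k * de) <= CA * (k * d0).
  by apply: ler_wpM2l; [apply: ltW|apply: ler_wpM2l => //; apply: ltW].
lra.
Qed.

Lemma ri_act (R : realType) m n (N : 'cV[R]_n -> R) (A : 'M[R]_(m, n)) b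
    (F : set 'cV[R]_n) x y :
  is_norm N -> F `<=` feas A b -> ri N F x -> F y ->
  forall i, (A *m x) i 0 = b i 0 -> (A *m y) i 0 = b i 0.
Proof.
move=> hN hFP [hFx [e [e0 he]]] hFy i hxi.
have Nxy0 := Nge0 (x - y) hN.
pose s := e / (2 * (N (x - y) + 1)).
have s0 : 0 < s by rewrite divr_gt0 // mulr_gt0 //; lra.
pose x' := (1 + s) *: x - s *: y.
have hx' : F x'.
  apply: he.
    pose p := fun i : 'I_2 => if val i == 0%N then x else y.
    pose lam := fun i : 'I_2 => if val i == 0%N then 1 + s else - s.
    exists 2%N, p, lam; split.
    - by move=> j; rewrite /p; case: ifP.
    - by rewrite big_ord_recl big_ord_recl big_ord0 /lam /=; ring.
    - by rewrite big_ord_recl big_ord_recl big_ord0 /lam /p /= addr0 scaleNr.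
  have -> : x' - x = s *: (x - y) by apply/matrixP => i' j; rewrite !mxE; ring.
  have := hN; case=> _ hZ _; rewrite hZ gtr0_norm //.
  apply: (@le_lt_trans _ _ (s * (N (x - y) + 1))).
    by apply: ler_wpM2l; [apply: ltW|lra].
  have -> : s * (N (x - y) + 1) = e / 2.
    by rewrite /s; field; rewrite gt_eqF //; lra.
  lra.
have := hFP _ hx' i; rewrite /x' AB !AZ hxi.
have := hFP _ hFy i => hyi hh.
have : s * b i 0 <= s * (A *m y) i 0 by lra.
rewrite ler_pM2l // => h2; apply/eqP; rewrite eq_le hyi h2 //.
Qed.

Theorem lemma2 (R : realType) (m n : nat) (N : 'cV[R]_n -> R)
    (A : 'M[R]_(m, n)) (b : 'cV[R]_m) (F : set 'cV[R]_n) :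
  is_norm N ->
  feas A b !=set0 ->
  is_face (feas A b) F ->
  exists g : R, 0 <= g /\
    (forall x, ri N F x -> clm N A b x = g%:E) /\
    (forall x, F x -> ~ ri N F x -> (g%:E <= clm N A b x)%E).
Proof.
move=> hN hP [hFP _ _].
have clm_ge0 : forall x, (0%:E <= clm N A b x)%E.
  move=> x; apply: le_ereal_inf_tmp => _ [k [k0 _] <-]; by rewrite lee_fin.
case: (pselect (exists x, ri N F x)) => [[x0 hx0]|nri]; last first.
  exists 0; split => //; split => // x hx; by exfalso; apply: nri; exists x.
have hx0P : feas A b x0 := hFP _ hx0.1.
have [k hk] := calm_exists hN hx0P.
have lb0 : has_lbound (calm_const N A b x0) by exists 0 => y [].
have ne0 : calm_const N A b x0 !=set0 by exists k.
exists (inf (calm_const N A b x0)); split.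
  by apply: lb_le_inf => // y [].
split.
  move=> x hx; rewrite /clm.
  have -> : calm_const N A b x = calm_const N A b x0.
    apply/seteqP; split => k' hk'.
      apply: (transfer hN hx0P (hFP _ hx.1) _ hk').
      exact: (ri_act hN hFP hx0 hx.1).
    apply: (transfer hN (hFP _ hx.1) hx0P _ hk').
    exact: (ri_act hN hFP hx hx0.1).
  by rewrite /clm ereal_inf_EFin.
move=> y hy _.
apply: le_ereal_inf_tmp => _ [k' hk' <-]; rewrite lee_fin.
apply: ge_inf => //.
apply: (transfer hN hx0P (hFP _ hy) _ hk').
exact: (ri_act hN hFP hx0 hy).
Qed.
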